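(* For all integers $k \geq 2$, $\nu_2(P_kQ_k - k) \geq 2$, i.e., $4$ divides $P_kQ_k - k$.
   Context: The Pell sequence $(P_n)_{n\ge0}$ is defined by $P_0=0$, $P_1=1$, $P_n = 2P_{n-1}+P_{n-2}$. The associated Pell sequence $(Q_n)_{n\ge0}$ is defined by $Q_0=1$, $Q_1=1$, $Q_n=2Q_{n-1}+Q_{n-2}$. For a prime $p$ and a nonzero integer $n$, $\nu_p(n)$ denotes the $p$-adic valuation of $n$, the largest nonnegative integer $j$ such that $p^j$ divides $n$ (with $\nu_p(0)=\infty$). *)

(* Defs.v *)
From mathcomp Require Import all_boot all_order all_algebra.
Set Implicit Arguments. Unset Strict Implicit. Unset Printing Implicit Defensive.

Fixpoint pell (n : nat) : nat :=
  match n with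
  | 0 => 0
  | 1 => 1
  | (m.+1 as n1).+1 => 2 * pell n1 + pell m
  end.

Fixpoint qpell (n : nat) : nat :=
  match n with
  | 0 => 1
  | 1 => 1
  | (m.+1 as n1).+1 => 2 * qpell n1 + qpell m
  end.

(* Main.v *)
Require Import Defs.
From mathcomp Require Import all_boot all_order all_algebra.
From mathcomp Require Import zify.

Lemma pell4 n : pell n.+4 = 12 * pell n.+1 + 5 * pell n.
Proof. simpl; lia. Qed.
Lemma qpell4 n : qpell n.+4 = 12 * qpell n.+1 + 5 * qpell n.
Proof. simpl; lia. Qed.

Lemma pellm r q : pell (r + 4 * q) %% 4 = pell r %% 4.
Proof.
elim: q => [|q IH]; first by rewrite muln0 addn0.
have -> : r + 4 * q.+1 = (r + 4 * q).+4 by lia.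
rewrite pell4 -IH; lia.
Qed.
Lemma qpellm r q : qpell (r + 4 * q) %% 4 = qpell r %% 4.
Proof.
elim: q => [|q IH]; first by rewrite muln0 addn0.
have -> : r + 4 * q.+1 = (r + 4 * q).+4 by lia.
rewrite qpell4 -IH; lia.
Qed.

Lemma natmod k : (pell k * qpell k) %% 4 = k %% 4.
Proof.
have E : k = k %% 4 + 4 * (k %/ 4) by lia.
have : k %% 4 < 4 by rewrite ltn_pmod.
move: E; set r := k %% 4; set q := k %/ 4 => E.
rewrite E -modnMm pellm qpellm modnMm.
clear E; by case: r => [|[|[|[|r]]]].
Qed.

Theorem lemma27 (k : nat) : (2 <= k)%N ->
  (4%:Z %| ((pell k * qpell k)%:Z - k%:Z)%R)%Z.
Proof.
move=> _.
rewrite -eqz_mod_dvd !modz_nat natmod.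
by [].
Qed.
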